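(* Let $\mathcal{P}$ be a collection of cells, $K$ a field and $\prec$ a monomial order on $S_{\mathcal{P}}$. For an inner interval $[p,q]$ of $\mathcal{P}$ write $f_{p,q}=x_px_q-x_{p'}x_{q'}$ for its inner 2-minor, where $p',q'$ are its anti-diagonal corners. (i) Let $a=(a_1,a_2)$, $b=(b_1,b_2)$, $\beta=(\beta_1,\beta_2)$ with $a_1<b_1<\beta_1$, $a_2<b_2<\beta_2$, such that $[a,b]$ and $[b,\beta]$ are inner intervals of $\mathcal{P}$. Put $c=(a_1,b_2)$, $d=(b_1,a_2)$, $\gamma=(b_1,\beta_2)$, $\delta=(\beta_1,b_2)$. Assume that the $S$-polynomial $S(f_{a,b},f_{b,\beta})$ reduces to $0$ modulo the set of inner 2-minors of $\mathcal{P}$ with respect to $\prec$, and that $[c,\gamma]$ and $[d,\delta]$ are not inner intervals of $\mathcal{P}$. Then $\gcd(\mathrm{in}_\prec(f_{a,b}),\mathrm{in}_\prec(f_{b,\beta}))=1$. (ii) Let $[p,q]$ and $[p',q']$ be inner intervals of $\mathcal{P}$ meeting in the single point $b$, which is the upper left corner $(p_1,q_2)$ of $[p,q]$ and the lower right corner $(q'_1,p'_2)$ of $[p',q']$. Put $r=(p'_1,p_2)$ and $h=(q_1,q'_2)$. Assume $S(f_{p,q},f_{p',q'})$ reduces to $0$ modulo the inner 2-minors of $\mathcal{P}$ with respect to $\prec$ and that $[r,b]$ and $[b,h]$ are not inner intervals of $\mathcal{P}$. Then $\gcd(\mathrm{in}_\prec(f_{p,q}),\mathrm{in}_\prec(f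_{p',q'}))=1$.
   Context: For $a\le b$ in $\mathbb{Z}^2$ (componentwise), $[a,b]$ is the set of lattice points between them; it is proper if both coordinates of $a$ are strictly smaller than those of $b$; then $a,b$ are its diagonal corners and $(a_1,b_2),(b_1,a_2)$ its anti-diagonal corners (upper left and lower right). A cell is $[a,a+(1,1)]$. A collection of cells is a finite non-empty weakly connected set $\mathcal{P}$ of cells; $V(\mathcal{P})$ is the set of vertices of its cells. An inner interval of $\mathcal{P}$ is a proper interval all of whose cells belong to $\mathcal{P}$; its inner 2-minor is $x_ax_b-x_cx_d$ ($a,b$ diagonal, $c,d$ anti-diagonal corners). $S_{\mathcal{P}}=K[x_v:v\in V(\mathcal{P})]$. $\mathrm{in}_\prec(f)$ denotes the initial monomial. *)

(* Defs.v *)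
From HB Require Import structures.
From mathcomp Require Import all_boot all_order all_algebra.
From mathcomp Require Import mpoly.
Set Implicit Arguments. Unset Strict Implicit. Unset Printing Implicit Defensive.
Import Order.TTheory GRing.Theory Num.Theory.
Local Open Scope ring_scope.

Definition pt := (int * int)%type.

(* A cell [c, c+(1,1)] is represented by its lower-left corner c. *)
Definition cell_vertices (c : pt) : seq pt :=
  [:: c; (c.1 + 1, c.2); (c.1, c.2 + 1); (c.1 + 1, c.2 + 1)].

Definition cells_meet (c d : pt) : bool :=
  (`|c.1 - d.1| <= 1) && (`|c.2 - d.2| <= 1).

Definition weakly_connected (P : seq pt) : Prop :=
  forall c d, c \in P -> d \in P ->
    exists s : seq pt, all (mem P) s /\ path cells_meet c s /\ last c s = d.

Definition collection_of_cells (P : seq pt) : Prop :=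
  P != [::] /\ weakly_connected P.

Definition VP (P : seq pt) : seq pt := undup (flatten (map cell_vertices P)).

Definition nv (P : seq pt) : nat := size (VP P).

(* S_P = K[x_v : v in V(P)], variable x_v is 'X_(index of v in VP P). *)
Definition xv (K : fieldType) (P : seq pt) (v : pt) : {mpoly K[nv P]} :=
  match @insub nat (fun i => i < nv P)%N _ (index v (VP P)) with
  | Some i => 'X_i
  | None => 0
  end.

Definition inner_interval (P : seq pt) (a b : pt) : Prop :=
  a.1 < b.1 /\ a.2 < b.2 /\
  forall c : pt, a.1 <= c.1 -> c.1 < b.1 -> a.2 <= c.2 -> c.2 < b.2 -> c \in P.

Definition in_interval (a b v : pt) : Prop :=
  a.1 <= v.1 <= b.1 /\ a.2 <= v.2 <= b.2.

Definition minor (K : fieldType) (P : seq pt) (p q : pt) : {mpoly K[nv P]} :=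
  xv K P p * xv K P q - xv K P (p.1, q.2) * xv K P (q.1, p.2).

Definition is_inner_minor (K : fieldType) (P : seq pt) (f : {mpoly K[nv P]}) : Prop :=
  exists p q, inner_interval P p q /\ f = minor K P p q.

Definition monomial_order (n : nat) (le : rel 'X_{1..n}) : Prop :=
  [/\ reflexive le, antisymmetric le, transitive le & total le] /\
  (forall m, le 0%MM m) /\
  (forall m1 m2 m, le m1 m2 -> le (m1 + m)%MM (m2 + m)%MM).

(* Initial monomial: the le-largest monomial of the support (0 for f = 0) *)
Definition init (K : fieldType) (n : nat) (le : rel 'X_{1..n}) (f : {mpoly K[n]})
  : 'X_{1..n} :=
  foldr (fun m acc => if le acc m then m else acc) 0%MM (msupp f).

Definition lcoef (K : fieldType) (n : nat) (le : rel 'X_{1..n}) (f : {mpoly K[n]}) : K :=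
  f@_(init le f).

Definition mgcd (n : nat) (m1 m2 : 'X_{1..n}) : 'X_{1..n} :=
  [multinom minn (m1 i) (m2 i) | i < n].

Definition spoly (K : fieldType) (n : nat) (le : rel 'X_{1..n}) (f g : {mpoly K[n]})
  : {mpoly K[n]} :=
  let l := mlcm (init le f) (init le g) in
  (lcoef le f)^-1 *: ('X_[(l - init le f)%MM] * f)
  - (lcoef le g)^-1 *: ('X_[(l - init le g)%MM] * g).

(* f reduces to 0 modulo G (standard expression with remainder 0):
   f = sum_i h_i g_i with g_i in G and in(h_i g_i) <= in(f) whenever h_i g_i != 0 *)
Definition reduces_to_zero (K : fieldType) (n : nat) (le : rel 'X_{1..n})
  (G : {mpoly K[n]} -> Prop) (f : {mpoly K[n]}) : Prop :=
  exists (k : nat) (h g : nat -> {mpoly K[n]}),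
    [/\ forall i, (i < k)%N -> G (g i),
        f = \sum_(i < k) h i * g i
      & forall i, (i < k)%N -> h i * g i != 0 -> le (init le (h i * g i)) (init le f)].

(* Main.v *)
Require Import Defs.
From HB Require Import structures.
From mathcomp Require Import all_boot all_order all_algebra.
From mathcomp Require Import mpoly.
From mathcomp Require Import zify.
Set Implicit Arguments. Unset Strict Implicit. Unset Printing Implicit Defensive.
Import Order.TTheory GRing.Theory Num.Theory.
Local Open Scope ring_scope.

Section MO.
Variables (K : fieldType) (n : nat) (le : rel 'X_{1..n}).
Hypothesis Hle : monomial_order le.

Let F (s : seq 'X_{1..n}) := foldr (fun m acc => if le acc m then m else acc) 0%MM s.

Lemma F_ub s m : m \in s -> le m (F s).
Proof.
case: Hle => [[Hr Ha Ht Htot] [H0 Hc]].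
elim: s => //= x s IH; rewrite inE => /orP [/eqP -> | /IH h].
  by case: ifP => [_|/negbT hn]; [exact: Hr | by case/orP: (Htot x (F s)) => //; rewrite (negbTE hn)].
by case: ifP => [h2|_] //; exact: Ht h h2.
Qed.

Lemma F_mem s : s != [::] -> F s \in s.
Proof.
case: Hle => [[Hr Ha Ht Htot] [H0 Hc]].
elim: s => //= x s IH _; case: ifP => [_|hn]; first by rewrite inE eqxx.
case: s IH hn => [|y s] IH hn; first by rewrite /= H0 in hn.
by rewrite inE IH ?orbT.
Qed.

Lemma init_ub (f : {mpoly K[n]}) m : m \in msupp f -> le m (init le f).
Proof. exact: F_ub. Qed.

Lemma init_supp (f : {mpoly K[n]}) : f != 0 -> init le f \in msupp f.
Proof. by move=> nz; apply: F_mem; rewrite msupp_eq0. Qed.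

Lemma coefM (h g : {mpoly K[n]}) M :
  (h * g)@_M = \sum_(m <- [seq (x, y) | x <- msupp h, y <- msupp g])
     (h@_m.1 * g@_m.2) * ((m.1 + m.2)%MM == M)%:R.
Proof.
rewrite {1}mpolyME raddf_sum /=; apply: eq_bigr => m _.
by rewrite mcoeffZ mcoeffX.
Qed.

Lemma prod_ub (h g : {mpoly K[n]}) M : (h * g)@_M != 0 ->
  le M (init le h + init le g)%MM.
Proof.
case: Hle => [[Hr Ha Ht Htot] [H0 Hc]].
rewrite coefM; case: (boolP (has (fun m : 'X_{1..n} * 'X_{1..n} => m.1 + m.2 == M)%MM
   [seq (x, y) | x <- msupp h, y <- msupp g])).
  case/hasP => [[m1 m2]] /allpairsP [[x y] /= [hx hy [-> ->]]] /eqP <- _.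
  apply: (Ht (init le h + y)%MM); first exact/Hc/init_ub.
  rewrite addmC [(_ + init le g)%MM]addmC; exact/Hc/init_ub.
move/hasPn => hn; rewrite big1_seq ?eqxx // => m /hn /negbTE ->; by rewrite mulr0.
Qed.

Lemma prod_top (h g : {mpoly K[n]}) : h != 0 -> g != 0 ->
  (h * g)@_(init le h + init le g)%MM = h@_(init le h) * g@_(init le g).
Proof.
case: Hle => [[Hr Ha Ht Htot] [H0 Hc]] => hn gn.
rewrite coefM (bigD1_seq (init le h, init le g)) /=; last first.
- apply: allpairs_uniq; rewrite ?msupp_uniq //.
  by move=> [? ?] [? ?] _ _.
- by apply/allpairsP; exists (init le h, init le g); rewrite !init_supp.
rewrite eqxx mulr1 big_seq_cond big1 ?addr0 // => [[m1 m2]] /andP [/allpairsP [[x y] /= [hx hy [-> ->]]] hne].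
case: eqP => [E|]; last by rewrite mulr0.
have l1 : le (x + y)%MM (init le h + y)%MM by exact/Hc/init_ub.
have l2 : le (init le h + y)%MM (init le h + init le g)%MM.
  rewrite addmC [(_ + init le g)%MM]addmC; exact/Hc/init_ub.
have E2 : (init le h + y)%MM = (init le h + init le g)%MM.
  by apply: Ha; rewrite l2 -E l1.
have Ey := addmI E2; rewrite Ey in E; have Ex := addIm E.
by move: hne; rewrite Ex Ey eqxx.
Qed.

Lemma red_div (G : {mpoly K[n]} -> Prop) (S : {mpoly K[n]}) :
  reduces_to_zero le G S -> S != 0 ->
  exists g, G g /\ forall j, (init le g j <= init le S j)%N.
Proof.
case: Hle => [[Hr Ha Ht Htot] [H0 Hc]].
move=> [k [h [g [HG HS Hin]]]] Sn.
have : S@_(init le S) != 0 by rewrite -mcoeff_msupp init_supp.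
set M := init le S; rewrite HS raddf_sum /=.
case: (boolP [exists i : 'I_k, (h i * g i)@_M != 0]).
  case/existsP => i hi _; exists (g i); split; first exact: HG.
  have hgn : h i * g i != 0 by apply: contraNneq hi => ->; rewrite mcoeff0.
  have hn : h i != 0 by apply: contraNneq hgn => ->; rewrite mul0r.
  have gn : g i != 0 by apply: contraNneq hgn => ->; rewrite mulr0.
  have u1 := prod_ub hi.
  have u2 : le (init le (h i) + init le (g i))%MM (init le (h i * g i)).
    apply: init_ub; rewrite mcoeff_msupp prod_top //.
    by rewrite mulf_neq0 // -mcoeff_msupp init_supp.
  have u3 := Hin i (ltn_ord i) hgn.
  have E : M = (init le (h i) + init le (g i))%MM.
    by apply: Ha; rewrite u1 (Ht _ _ _ u2 u3).
  by move=> j; rewrite E mnmDE leq_addl.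
rewrite negb_exists => /forallP hall; rewrite big1 ?eqxx // => i _.
by apply/eqP; move: (hall i); rewrite negbK.
Qed.

End MO.
Section Geo.
Variables (K : fieldType) (P : seq pt).
Local Notation n := (nv P).

Definition mv (v : pt) : 'X_{1..n} :=
  match @insub nat (fun i => i < n)%N _ (index v (VP P)) with
  | Some i => U_(i)%MM
  | None => 0%MM
  end.

Lemma xvE v : v \in VP P -> xv K P v = 'X_[mv v].
Proof.
move=> hv; rewrite /xv /mv; case: insubP => //.
by rewrite /nv index_mem hv.
Qed.

Lemma mvE v j : v \in VP P -> mv v j = (val j == index v (VP P)).
Proof.
move=> hv; rewrite /mv; case: insubP => [i _ hi|]; last by rewrite /nv index_mem hv.
by rewrite mnm1E -val_eqE hi eq_sym.
Qed.

Lemma coordP u : u \in VP P ->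
  exists j : 'I_n, forall w, w \in VP P -> mv w j = (w == u).
Proof.
move=> hu; have hi : (index u (VP P) < n)%N by rewrite /nv index_mem.
exists (Ordinal hi) => w hw; rewrite mvE //=; congr nat_of_bool.
case: (w =P u) => [->|ne]; first by rewrite eqxx.
apply/negbTE; apply/eqP => E; apply: ne; move: (esym E); apply: index_inj => //.
Qed.

Lemma cell_VP c v : c \in P -> v \in cell_vertices c -> v \in VP P.
Proof.
move=> hc hv; rewrite /VP mem_undup; apply/flatten_mapP; by exists c.
Qed.

Lemma inner_VP p q : inner_interval P p q ->
  [/\ p \in VP P, q \in VP P, (p.1, q.2) \in VP P & (q.1, p.2) \in VP P].
Proof.
case: p q => [p1 p2] [q1 q2] [/= h1 [h2 hc]]; split.
- apply: (@cell_VP (p1, p2)); first by apply: hc => /=; lia.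
  by rewrite inE eqxx.
- apply: (@cell_VP (q1 - 1, q2 - 1)); first by apply: hc => /=; lia.
  by rewrite !inE /= !subrK eqxx !orbT.
- apply: (@cell_VP (p1, q2 - 1)); first by apply: hc => /=; lia.
  by rewrite !inE /= !subrK eqxx !orbT.
- apply: (@cell_VP (q1 - 1, p2)); first by apply: hc => /=; lia.
  by rewrite !inE /= !subrK eqxx !orbT.
Qed.

Lemma minorE p q : inner_interval P p q ->
  minor K P p q = 'X_[mv p + mv q] - 'X_[mv (p.1, q.2) + mv (q.1, p.2)].
Proof.
by case/inner_VP => *; rewrite /minor !xvE // !mpolyXD.
Qed.


Lemma neqF (a b : pt) : a <> b -> (b == a) = false.
Proof. by move=> ne; apply/eqP => E; apply: ne. Qed.

Lemma mv_le1 x j : (mv x j <= 1)%N.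
Proof. rewrite /mv; case: insubP => [i _ _|_]; rewrite ?mnm1E ?mnm0E //; exact: leq_b1. Qed.

Lemma mv_disj x z j : x \in VP P -> z \in VP P -> x <> z -> mv x j = 0%N \/ mv z j = 0%N.
Proof.
move=> hx hz ne; rewrite !mvE //.
case: (val j =P index x (VP P)) => [E|]; last by left.
right; case: (val j =P index z (VP P)) => [E2|] //.
by exfalso; apply: ne; move: E2; rewrite E; apply: index_inj.
Qed.

Lemma neq2 x y z w : x \in VP P -> z \in VP P -> w \in VP P -> x <> z -> x <> w ->
  (mv x + mv y)%MM <> (mv z + mv w)%MM.
Proof.
move=> hx hz hw nz nw E; case: (coordP hx) => j hj.
move/mnmP: E => /(_ j); rewrite !mnmDE (hj x) // (hj z) // (hj w) //.
by rewrite eqxx !neqF.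
Qed.

Lemma neq3 x y y' z w u : x \in VP P -> z \in VP P -> w \in VP P -> u \in VP P ->
  x <> z -> x <> w -> x <> u ->
  (mv x + mv y + mv y')%MM <> (mv z + mv w + mv u)%MM.
Proof.
move=> hx hz hw hu nz nw nu E; case: (coordP hx) => j hj.
move/mnmP: E => /(_ j); rewrite !mnmDE (hj x) // (hj z) // (hj w) // (hj u) //.
by rewrite eqxx !neqF // addnAC.
Qed.

Lemma gcd0 x y z w : x \in VP P -> y \in VP P -> z \in VP P -> w \in VP P ->
  x <> z -> x <> w -> y <> z -> y <> w ->
  mgcd (mv x + mv y)%MM (mv z + mv w)%MM = 0%MM.
Proof.
move=> hx hy hz hw n1 n2 n3 n4; apply/mnmP => j; rewrite mnmE !mnmDE mnm0E.
have := mv_disj j hx hz n1; have := mv_disj j hx hw n2.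
have := mv_disj j hy hz n3; have := mv_disj j hy hw n4.
have := mv_le1 x j; have := mv_le1 y j; have := mv_le1 z j; have := mv_le1 w j.
lia.
Qed.

Lemma div3 u v x y z : u \in VP P -> v \in VP P -> x \in VP P -> y \in VP P -> z \in VP P ->
  (forall j, ((mv u + mv v)%MM j <= (mv x + mv y + mv z)%MM j)%N) ->
  (u = x \/ u = y \/ u = z) /\ (v = x \/ v = y \/ v = z).
Proof.
move=> hu hv hx hy hz H; split.
  case: (coordP hu) => j hj; move: (H j); rewrite !mnmDE !hj // eqxx.
  by case: (v =P u) => ?; case: (x =P u) => ?; case: (y =P u) => ?; case: (z =P u) => ? //= _; intuition congruence.
case: (coordP hv) => j hj; move: (H j); rewrite !mnmDE !hj // eqxx.
by rewrite addn1; case: (u =P v) => ?; case: (x =P v) => ?; case: (y =P v) => ?; case: (z =P v) => ? //= _; intuition congruence.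
Qed.

End Geo.
Section Bin.
Variables (K : fieldType) (n : nat) (le : rel 'X_{1..n}).
Implicit Types (A B m : 'X_{1..n}).

Lemma bin_coef A B m : ('X_[A] - 'X_[B] : {mpoly K[n]})@_m = (A == m)%:R - (B == m)%:R.
Proof. by rewrite mcoeffB !mcoeffX. Qed.

Lemma bin_neq0 A B : A != B -> ('X_[A] - 'X_[B] : {mpoly K[n]}) != 0.
Proof.
move=> ne; apply/eqP => /(congr1 (mcoeff A)); rewrite bin_coef mcoeff0 eqxx eq_sym (negbTE ne).
by rewrite subr0 => /eqP; rewrite oner_eq0.
Qed.

Lemma bin_supp A B m : m \in msupp ('X_[A] - 'X_[B] : {mpoly K[n]}) -> m = A \/ m = B.
Proof.
rewrite mcoeff_msupp bin_coef; case: (A =P m) => [->|_]; first by left.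
case: (B =P m) => [->|_]; first by right.
by rewrite subrr eqxx.
Qed.

Lemma lcoefA A B (f : {mpoly K[n]}) : A != B -> init le f = A -> f = 'X_[A] - 'X_[B] ->
  (lcoef le f)^-1 *: f = 'X_[A] - 'X_[B].
Proof.
move=> ne hi hf; rewrite /lcoef hi {1}hf bin_coef eqxx eq_sym (negbTE ne) subr0 invr1 scale1r.
exact: hf.
Qed.

Lemma lcoefB A B (f : {mpoly K[n]}) : A != B -> init le f = B -> f = 'X_[A] - 'X_[B] ->
  (lcoef le f)^-1 *: f = 'X_[B] - 'X_[A].
Proof.
move=> ne hi hf; rewrite /lcoef hi {1}hf bin_coef eqxx (negbTE ne) sub0r invrN invr1.
by rewrite hf scaleN1r opprB.
Qed.

Lemma spoly_bin (f g : {mpoly K[n]}) A1 B1 A2 B2 :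
  init le f = A1 -> (lcoef le f)^-1 *: f = 'X_[A1] - 'X_[B1] ->
  init le g = A2 -> (lcoef le g)^-1 *: g = 'X_[A2] - 'X_[B2] ->
  spoly le f g = 'X_[(mlcm A1 A2 - A2) + B2] - 'X_[(mlcm A1 A2 - A1) + B1].
Proof.
move=> h1 e1 h2 e2; rewrite /spoly h1 h2 !scalerAr e1 e2 !mulrBr -!mpolyXD.
have E1 : (mlcm A1 A2 - A1 + A1)%MM = mlcm A1 A2.
  by apply/mnmP => j; rewrite mnmDE mnmBE !mnmE; lia.
have E2 : (mlcm A1 A2 - A2 + A2)%MM = mlcm A1 A2.
  by apply/mnmP => j; rewrite mnmDE mnmBE !mnmE; lia.
rewrite E1 E2 opprB addrC addrA subrK.
by [].
Qed.

End Bin.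

Lemma inner_sub (P : seq pt) (p q r s : pt) : inner_interval P p q ->
  p.1 <= r.1 -> r.1 < s.1 -> s.1 <= q.1 -> p.2 <= r.2 -> r.2 < s.2 -> s.2 <= q.2 ->
  inner_interval P r s.
Proof.
move=> [_ [_ H]] *; split => //; split => // c *; apply: H; lia.
Qed.

Section Main.
Variables (K : fieldType) (P : seq pt) (le : rel 'X_{1..nv P}).
Hypothesis Hle : monomial_order le.

Lemma init_minor p q : inner_interval P p q ->
  let A := (mv P p + mv P q)%MM in let B := (mv P (p.1, q.2) + mv P (q.1, p.2))%MM in
  [/\ A <> B, minor K P p q = 'X_[A] - 'X_[B] &
     init le (minor K P p q) = A \/ init le (minor K P p q) = B].
Proof.
move=> H A B; have [vp vq vr vs] := inner_VP H.
have AB : A <> B.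
  apply: neq2 => //; case: p q H {vp vq vr vs A B} => [p1 p2] [q1 q2] [/= h1 [h2 _]]; case=> *; lia.
rewrite /A /B in AB *; have mE := minorE K H; split => //.
apply: (@bin_supp K); rewrite -mE; apply: init_supp => //; rewrite mE; apply: bin_neq0; exact/eqP.
Qed.

Lemma final_pts x y z (g : {mpoly K[nv P]}) :
  is_inner_minor g -> x \in VP P -> y \in VP P -> z \in VP P ->
  (forall j, (init le g j <= (mv P x + mv P y + mv P z)%MM j)%N) ->
  exists p q, inner_interval P p q /\
   ((init le (minor K P p q) = (mv P p + mv P q)%MM /\
     (p = x \/ p = y \/ p = z) /\ (q = x \/ q = y \/ q = z)) \/
    (init le (minor K P p q) = (mv P (p.1, q.2) + mv P (q.1, p.2))%MM /\
     ((p.1, q.2) = x \/ (p.1, q.2) = y \/ (p.1, q.2) = z) /\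
     ((q.1, p.2) = x \/ (q.1, p.2) = y \/ (q.1, p.2) = z))).
Proof.
move=> [p [q [H ->]]] hx hy hz hle; exists p, q; split => //.
have [vp vq vr vs] := inner_VP H.
have [_ _ [Hi|Hi]] := init_minor H; rewrite Hi in hle.
  by left; split => //; exact: (div3 vp vq hx hy hz hle).
by right; split => //; exact: (div3 vr vs hx hy hz hle).
Qed.

End Main.

Unset Implicit Arguments.

Ltac pneq := let E := fresh in move=> E; case: E => *; lia.

Theorem lemma2p1 (K : fieldType) (P : seq pt) (le : rel 'X_{1..nv P}) :
  collection_of_cells P -> monomial_order le ->
  (forall a b beta : pt,
     a.1 < b.1 < beta.1 -> a.2 < b.2 < beta.2 ->
     inner_interval P a b -> inner_interval P b beta ->
     reduces_to_zero le (is_inner_minor (K:=K) (P:=P))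
       (spoly le (minor K P a b) (minor K P b beta)) ->
     ~ inner_interval P (a.1, b.2) (b.1, beta.2) ->
     ~ inner_interval P (b.1, a.2) (beta.1, b.2) ->
     mgcd (init le (minor K P a b)) (init le (minor K P b beta)) = 0%MM)
  /\
  (forall p q p' q' b : pt,
     inner_interval P p q -> inner_interval P p' q' ->
     (forall v, in_interval p q v /\ in_interval p' q' v <-> v = b) ->
     b = (p.1, q.2) -> b = (q'.1, p'.2) ->
     reduces_to_zero le (is_inner_minor (K:=K) (P:=P))
       (spoly le (minor K P p q) (minor K P p' q')) ->
     ~ inner_interval P (p'.1, p.2) b ->
     ~ inner_interval P b (q.1, q'.2) ->
     mgcd (init le (minor K P p q)) (init le (minor K P p' q')) = 0%MM).
Proof.
move=> _ Hle; split.
- move=> [a1 a2] [b1 b2] [e1 e2] /= /andP[h1 h1'] /andP[h2 h2'] Hab Hbe Hred F1 F2.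
  have [va vb vc vd] := inner_VP Hab.
  have [_ ve vg vh] := inner_VP Hbe.
  simpl in *.
  have [nAB mAB [Ia|Ia]] := @init_minor K P le Hle _ _ Hab; have [nBE mBE [Ib|Ib]] := @init_minor K P le Hle _ _ Hbe;
    simpl in *; rewrite Ia Ib; try (apply: gcd0 => //; pneq).
  exfalso.
  have := spoly_bin Ia (lcoefA (introN eqP nAB) Ia mAB) Ib (lcoefA (introN eqP nBE) Ib mBE).
  move=> Es; rewrite Es in Hred.
  have L : mlcm (mv P (a1, a2) + mv P (b1, b2)) (mv P (b1, b2) + mv P (e1, e2)) =
     (mv P (a1, a2) + mv P (b1, b2) + mv P (e1, e2))%MM.
    apply/mnmP => j; rewrite !mnmE; have := mv_disj j va ve ltac:(pneq); lia.
  rewrite L in Hred.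
  have M1 : (mv P (a1, a2) + mv P (b1, b2) + mv P (e1, e2) - (mv P (b1, b2) + mv P (e1, e2))
     + (mv P (b1, e2) + mv P (e1, b2)) = mv P (a1, a2) + mv P (b1, e2) + mv P (e1, b2))%MM.
    by apply/mnmP => j; rewrite !mnmE; lia.
  have M2 : (mv P (a1, a2) + mv P (b1, b2) + mv P (e1, e2) - (mv P (a1, a2) + mv P (b1, b2))
     + (mv P (a1, b2) + mv P (b1, a2)) = mv P (e1, e2) + mv P (a1, b2) + mv P (b1, a2))%MM.
    by apply/mnmP => j; rewrite !mnmE; lia.
  rewrite M1 M2 in Hred.
  have nS : (mv P (a1, a2) + mv P (b1, e2) + mv P (e1, b2))%MM != (mv P (e1, e2) + mv P (a1, b2) + mv P (b1, a2))%MM.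
    by apply/eqP; apply: neq3 => //; pneq.
  have Sn := bin_neq0 K nS.
  have [g [Gg Hg]] := red_div Hle Hred Sn.
  have [IS|IS] := bin_supp (init_supp Hle Sn); rewrite IS in Hg.
  + have [[p1 p2] [[q1 q2] [Hpq Hc]]] := final_pts Hle Gg va vg vh Hg.
    have [hp1 [hp2 _]] := Hpq; simpl in *.
    clear Hg Gg Hred Es L M1 M2 nS Sn IS mAB mBE va vb vc vd ve vg vh.
    case: Hc => [[Hi [Hu Hv]]|[Hi [Hu Hv]]];
    case: Hu => [Hu|[Hu|Hu]]; case: Hv => [Hv|[Hv|Hv]]; case: Hu => ? ?; case: Hv => ? ?; subst.
    all: try lia.
    all: try first [ (exfalso; apply: F1; apply: (inner_sub Hpq); rewrite /=; lia)
          | (exfalso; apply: F2; apply: (inner_sub Hpq); rewrite /=; lia)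
          | (exfalso; apply: nAB; rewrite -Ia Hi; done)
          | (exfalso; apply: nBE; rewrite -Ib Hi; done) ].
  + have [[p1 p2] [[q1 q2] [Hpq Hc]]] := final_pts Hle Gg ve vc vd Hg.
    have [hp1 [hp2 _]] := Hpq; simpl in *.
    clear Hg Gg Hred Es L M1 M2 nS Sn IS mAB mBE va vb vc vd ve vg vh.
    case: Hc => [[Hi [Hu Hv]]|[Hi [Hu Hv]]];
    case: Hu => [Hu|[Hu|Hu]]; case: Hv => [Hv|[Hv|Hv]]; case: Hu => ? ?; case: Hv => ? ?; subst.
    all: try lia.
    all: try first [ (exfalso; apply: F1; apply: (inner_sub Hpq); rewrite /=; lia)
          | (exfalso; apply: F2; apply: (inner_sub Hpq); rewrite /=; lia)
          | (exfalso; apply: nAB; rewrite -Ia Hi; done)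
          | (exfalso; apply: nBE; rewrite -Ib Hi; done) ].
- move=> [p1 p2] [q1 q2] [r1 r2] [s1 s2] [b1 b2] Hpq Hrs _ /= Eb1 Eb2 Hred.
  case: Eb1 => ? ?; subst b1 b2; case: Eb2 => E1 E2; subst s1 r2 => F1 F2.
  have [hp1 [hp2 _]] := Hpq; have [hr1 [hr2 _]] := Hrs; simpl in *.
  have [vp vq vb ve] := inner_VP Hpq.
  have [vr vs vg _] := inner_VP Hrs.
  simpl in *.
  have [nAB mAB [Ia|Ia]] := @init_minor K P le Hle _ _ Hpq; have [nBE mBE [Ib|Ib]] := @init_minor K P le Hle _ _ Hrs;
    simpl in *; rewrite Ia Ib; try (apply: gcd0 => //; pneq).
  exfalso.
  have := spoly_bin Ia (lcoefB (introN eqP nAB) Ia mAB) Ib (lcoefB (introN eqP nBE) Ib mBE).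
  move=> Es; rewrite Es in Hred.
  have L : mlcm (mv P (p1, q2) + mv P (q1, p2)) (mv P (r1, s2) + mv P (p1, q2)) =
     (mv P (p1, q2) + mv P (q1, p2) + mv P (r1, s2))%MM.
    apply/mnmP => j; rewrite !mnmE; have := mv_disj j ve vg ltac:(pneq); lia.
  rewrite L in Hred.
  have M1 : (mv P (p1, q2) + mv P (q1, p2) + mv P (r1, s2) - (mv P (r1, s2) + mv P (p1, q2))
     + (mv P (r1, q2) + mv P (p1, s2)) = mv P (q1, p2) + mv P (r1, q2) + mv P (p1, s2))%MM.
    by apply/mnmP => j; rewrite !mnmE; lia.
  have M2 : (mv P (p1, q2) + mv P (q1, p2) + mv P (r1, s2) - (mv P (p1, q2) + mv P (q1, p2))
     + (mv P (p1, p2) + mv P (q1, q2)) = mv P (r1, s2) + mv P (p1, p2) + mv P (q1, q2))%MM.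
    by apply/mnmP => j; rewrite !mnmE; lia.
  rewrite M1 M2 in Hred.
  have nS : (mv P (q1, p2) + mv P (r1, q2) + mv P (p1, s2))%MM != (mv P (r1, s2) + mv P (p1, p2) + mv P (q1, q2))%MM.
    by apply/eqP; apply: neq3 => //; pneq.
  have Sn := bin_neq0 K nS.
  have [g [Gg Hg]] := red_div Hle Hred Sn.
  have [IS|IS] := bin_supp (init_supp Hle Sn); rewrite IS in Hg.
  + have [[x1 x2] [[y1 y2] [Hxy Hc]]] := final_pts Hle Gg ve vr vs Hg.
    have [hx1 [hx2 _]] := Hxy; simpl in *.
    clear Hg Gg Hred Es L M1 M2 nS Sn IS mAB mBE vp vq vb ve vr vs vg.
    case: Hc => [[Hi [Hu Hv]]|[Hi [Hu Hv]]];
    case: Hu => [Hu|[Hu|Hu]]; case: Hv => [Hv|[Hv|Hv]]; case: Hu => ? ?; case: Hv => ? ?; subst.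
    all: try lia.
    all: try first [ (exfalso; apply: F1; apply: (inner_sub Hxy); rewrite /=; lia)
          | (exfalso; apply: F2; apply: (inner_sub Hxy); rewrite /=; lia)
          | (exfalso; apply: nAB; rewrite -Ia Hi; done)
          | (exfalso; apply: nBE; rewrite -Ib Hi; done) ].
  + have [[x1 x2] [[y1 y2] [Hxy Hc]]] := final_pts Hle Gg vg vp vq Hg.
    have [hx1 [hx2 _]] := Hxy; simpl in *.
    clear Hg Gg Hred Es L M1 M2 nS Sn IS mAB mBE vp vq vb ve vr vs vg.
    case: Hc => [[Hi [Hu Hv]]|[Hi [Hu Hv]]];
    case: Hu => [Hu|[Hu|Hu]]; case: Hv => [Hv|[Hv|Hv]]; case: Hu => ? ?; case: Hv => ? ?; subst.
    all: try lia.
    all: try first [ (exfalso; apply: F1; apply: (inner_sub Hxy); rewrite /=; lia)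
          | (exfalso; apply: F2; apply: (inner_sub Hxy); rewrite /=; lia)
          | (exfalso; apply: nAB; rewrite -Ia Hi; done)
          | (exfalso; apply: nBE; rewrite -Ib Hi; done) ].
Qed.
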